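(* Let $N_o>0$, $\alpha>2$ and $\eta(d)=\frac{1}{(1+d)^\alpha}$. (a) Given $C,D>0$ and a positive integer $m$, there exist $t,r\in\mathbb{R}^2$ and a set $T\subset\mathbb{R}^2$ with $m$ elements such that $(t,r,T)$ satisfies DC$(C,D)$ and, for every $P>0$, $$\mathrm{SINR}(t,r,T,P,N_o,\eta)\le\frac17\Big(\frac{1+2C(2+D)}{1+C}\Big)^\alpha\Big(\sum_{k=1}^{\lfloor\sqrt{m/7}-2\rfloor}\frac{1}{k^{\alpha-1}}\Big)^{-1}.$$ (b) If $\beta>0$ and $\frac17\Big(\frac{1+2C(2+D)}{1+C}\Big)^\alpha\Big(\sum_{k=1}^\infty\frac{1}{k^{\alpha-1}}\Big)^{-1}<\beta$, then $(C,D)$ does not ensure SINR$_\beta$; i.e., there exists $(t,r,T)$ satisfying DC$(C,D)$ such that for all $P>0$, $\mathrm{SINR}(t,r,T,P,N_o,\eta)<\beta$. (c) If $\beta>0$ and $\frac17\Big(\sum_{k=1}^\infty\frac{1}{k^{\alpha-1}}\Big)^{-1}<\beta$, then all sufficiently small $C,D>0$ do not ensure SINR$_\beta$.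
   Context: $\mathrm{SINR}(t,r,T,P,N_o,\eta)=\dfrac{P\eta(\|t-r\|)}{N_o+\sum_{t'\in T}P\eta(\|t'-r\|)}$ for $t,r\in\mathbb{R}^2$, $T$ a finite subset of $\mathbb{R}^2$, $P>0$. $(t,r,T)$ satisfies DC$(C,D)$ if $\|t-r\|\le C$ and $\|t'-t''\|\ge C(2+D)$ for all distinct $t',t''\in T\cup\{t\}$. The pair $(C,D)$ ensures SINR$_\beta$ if there exists $P>0$ such that every triple $(t,r,T)$ satisfying DC$(C,D)$ has $\mathrm{SINR}\ge\beta$. *)

(* Defs.v *)
From Stdlib Require Import Reals Lra List ZArith.
From Coquelicot Require Import Coquelicot.
Open Scope R_scope.

Definition pt := (R * R)%type.
Definition dist2 (p q : pt) : R :=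
  sqrt ((fst p - fst q) ^ 2 + (snd p - snd q) ^ 2).

Definition sumR (l : list R) : R := fold_right Rplus 0 l.

(* A finite subset T of R^2 is represented by a duplicate-free list. *)
Definition SINR (t r : pt) (T : list pt) (P No : R) (eta : R -> R) : R :=
  P * eta (dist2 t r) / (No + sumR (map (fun t' => P * eta (dist2 t' r)) T)).

Definition DC (C D : R) (t r : pt) (T : list pt) : Prop :=
  dist2 t r <= C /\
  forall a b, In a (t :: T) -> In b (t :: T) -> a <> b -> C * (2 + D) <= dist2 a b.

Definition ensures_SINR (C D beta No : R) (eta : R -> R) : Prop :=
  exists P, 0 < P /\
    forall (t r : pt) (T : list pt), NoDup T -> DC C D t r T ->
      beta <= SINR t r T P No eta.

Definition eta_pl (alpha d : R) : R := / Rpower (1 + d) alpha.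

Definition zeta_part (alpha : R) (K : nat) : R :=
  sumR (map (fun k => / Rpower (INR k) (alpha - 1)) (seq 1 K)).

Definition zeta_inf (alpha : R) : R :=
  Series (fun n => / Rpower (INR (S n)) (alpha - 1)).

(* floor(sqrt(m/7) - 2), truncated at 0 (empty sum when negative) *)
Definition Kbound (m : nat) : nat := Z.to_nat (Int_part (sqrt (INR m / 7) - 2)).

(* Main.v *)
Require Import Defs.
From Stdlib Require Import Reals List Lra Lia ZArith FinFun.
From Coquelicot Require Import Coquelicot.
Open Scope R_scope.

Definition sideA (k : nat) : list (Z*Z) :=
  map (fun p => ((- Z.of_nat k + Z.of_nat p)%Z, Z.of_nat k)) (seq 0 (2*k)).
Definition sideB (k : nat) : list (Z*Z) :=
  map (fun p => (Z.of_nat k, (Z.of_nat k - Z.of_nat p)%Z)) (seq 0 (2*k)).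
Definition sideC (k : nat) : list (Z*Z) :=
  map (fun p => ((Z.of_nat k - Z.of_nat p)%Z, (- Z.of_nat k)%Z)) (seq 0 (2*k)).
Definition sideD (k : nat) : list (Z*Z) :=
  map (fun p => ((- Z.of_nat k)%Z, (- Z.of_nat k + Z.of_nat p)%Z)) (seq 0 (2*k)).
Definition ringZ (k : nat) := sideA k ++ sideB k ++ sideC k ++ sideD k.

Fixpoint rings (n : nat) : list (Z*Z) :=
  match n with O => nil | S n' => rings n' ++ ringZ (S n') end.

Definition extra (K n : nat) : list (Z*Z) :=
  map (fun p => (Z.of_nat (K + 1 + p), 0%Z)) (seq 0 n).

Lemma inA k u : In u (sideA k) -> snd u = Z.of_nat k /\ (- Z.of_nat k <= fst u <= Z.of_nat k - 1)%Z.
Proof. unfold sideA; rewrite in_map_iff; intros [p [<- Hp]]; apply in_seq in Hp; simpl; lia. Qed.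
Lemma inB k u : In u (sideB k) -> fst u = Z.of_nat k /\ (- Z.of_nat k + 1 <= snd u <= Z.of_nat k)%Z.
Proof. unfold sideB; rewrite in_map_iff; intros [p [<- Hp]]; apply in_seq in Hp; simpl; lia. Qed.
Lemma inC k u : In u (sideC k) -> snd u = (- Z.of_nat k)%Z /\ (- Z.of_nat k + 1 <= fst u <= Z.of_nat k)%Z.
Proof. unfold sideC; rewrite in_map_iff; intros [p [<- Hp]]; apply in_seq in Hp; simpl; lia. Qed.
Lemma inD k u : In u (sideD k) -> fst u = (- Z.of_nat k)%Z /\ (- Z.of_nat k <= snd u <= Z.of_nat k - 1)%Z.
Proof. unfold sideD; rewrite in_map_iff; intros [p [<- Hp]]; apply in_seq in Hp; simpl; lia. Qed.

Lemma inRing k u : (1 <= k)%nat -> In u (ringZ k) ->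
  Z.max (Z.abs (fst u)) (Z.abs (snd u)) = Z.of_nat k.
Proof.
  intros Hk H; unfold ringZ in H; rewrite !in_app_iff in H.
  destruct H as [H|[H|[H|H]]]; [apply inA in H|apply inB in H|apply inC in H|apply inD in H]; lia.
Qed.

Lemma inRings n u : In u (rings n) -> exists k, (1 <= k <= n)%nat /\ In u (ringZ k).
Proof.
  induction n; simpl; [tauto|]. rewrite in_app_iff; intros [H|H].
  - destruct (IHn H) as [k [Hk H']]; exists k; split; [lia|auto].
  - exists (S n); split; [lia|auto].
Qed.

Lemma NoDup_ringZ k : (1 <= k)%nat -> NoDup (ringZ k).
Proof.
  intros Hk. unfold ringZ.
  assert (HA : NoDup (sideA k)).
  { apply Injective_map_NoDup; [intros x y E; injection E; lia| apply seq_NoDup]. }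
  assert (HB : NoDup (sideB k)).
  { apply Injective_map_NoDup; [intros x y E; injection E; lia| apply seq_NoDup]. }
  assert (HC : NoDup (sideC k)).
  { apply Injective_map_NoDup; [intros x y E; injection E; lia| apply seq_NoDup]. }
  assert (HD : NoDup (sideD k)).
  { apply Injective_map_NoDup; [intros x y E; injection E; lia| apply seq_NoDup]. }
  apply NoDup_app; [auto| |].
  - apply NoDup_app; [auto| |].
    + apply NoDup_app; auto. intros a H1 H2; apply inC in H1; apply inD in H2; lia.
    + intros a H1 H2; apply inB in H1; rewrite in_app_iff in H2;
      destruct H2 as [H2|H2]; [apply inC in H2|apply inD in H2]; lia.
  - intros a H1 H2; apply inA in H1; rewrite !in_app_iff in H2;
    destruct H2 as [H2|[H2|H2]]; [apply inB in H2|apply inC in H2|apply inD in H2]; lia.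
Qed.

Lemma NoDup_rings n : NoDup (rings n).
Proof.
  induction n; simpl; [constructor|].
  apply NoDup_app; auto. apply NoDup_ringZ; lia.
  intros a H1 H2. destruct (inRings _ _ H1) as [k [Hk H3]].
  apply inRing in H3; [|lia]. apply inRing in H2; [|lia]. lia.
Qed.

Lemma length_rings n : length (rings n) = (4 * n * (n + 1))%nat.
Proof.
  induction n; simpl; auto. rewrite length_app, IHn. unfold ringZ, sideA, sideB, sideC, sideD.
  rewrite !length_app, !length_map, !length_seq. lia.
Qed.

Definition LZ (K n : nat) := rings K ++ extra K n.

Lemma NoDup_LZ K n : NoDup (LZ K n).
Proof.
  apply NoDup_app. apply NoDup_rings.
  apply Injective_map_NoDup; [intros x y E; injection E; lia| apply seq_NoDup].
  intros a H1 H2. destruct (inRings _ _ H1) as [k [Hk H3]].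
  apply inRing in H3; [|lia]. unfold extra in H2; rewrite in_map_iff in H2.
  destruct H2 as [p [<- _]]. simpl in H3. lia.
Qed.
Lemma sumR_app l1 l2 : sumR (l1 ++ l2) = sumR l1 + sumR l2.
Proof. induction l1; simpl; [lra|]. rewrite IHl1; lra. Qed.

Lemma sumR_lb {A} (g : A -> R) (l : list A) c :
  (forall x, In x l -> c <= g x) -> INR (length l) * c <= sumR (map g l).
Proof.
  induction l; intros H; [simpl; lra|].
  replace (INR (length (a::l))) with (INR (length l) + 1) by (rewrite <- S_INR; reflexivity).
  change (sumR (map g (a :: l))) with (g a + sumR (map g l)). assert (c <= g a) by (apply H; left; auto).
  assert (INR (length l) * c <= sumR (map g l)) by (apply IHl; intros; apply H; right; auto). lra.
Qed.

Lemma sumR_nonneg {A} (g : A -> R) (l : list A) :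
  (forall x, In x l -> 0 <= g x) -> 0 <= sumR (map g l).
Proof. intros H. pose proof (sumR_lb g l 0 H). lra. Qed.

Lemma Rpower_pos x y : 0 < Rpower x y.
Proof. unfold Rpower; apply exp_pos. Qed.

Definition G (s : R) (u : Z * Z) : pt := (IZR (fst u) * s, IZR (snd u) * s).

Lemma grid_sep s u v : 0 < s -> u <> v -> s <= dist2 (G s u) (G s v).
Proof.
  intros Hs Huv. unfold dist2, G; simpl.
  rewrite <- (sqrt_pow2 s) at 1 by lra. apply sqrt_le_1_alt.
  destruct u as [u1 u2], v as [v1 v2]; simpl.
  replace (IZR u1 * s - IZR v1 * s) with (IZR (u1 - v1) * s) by (rewrite minus_IZR; ring).
  replace (IZR u2 * s - IZR v2 * s) with (IZR (u2 - v2) * s) by (rewrite minus_IZR; ring).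
  assert (H : (1 <= (u1 - v1) * (u1 - v1) + (u2 - v2) * (u2 - v2))%Z).
  { destruct (Z.eq_dec u1 v1); destruct (Z.eq_dec u2 v2); try (subst; congruence); nia. }
  apply IZR_le in H. rewrite plus_IZR, !mult_IZR in H.
  assert (0 <= s^2) by (apply pow2_ge_0). nra.
Qed.

Lemma ring_dist s C k u : 0 < s -> 0 < C -> 2 * C <= s -> (1 <= k)%nat ->
  (Z.max (Z.abs (fst u)) (Z.abs (snd u)) = Z.of_nat k)%Z ->
  dist2 (G s u) (C, 0) <= 2 * INR k * s.
Proof.
  intros Hs HC HCs Hk Hu. unfold dist2, G; simpl.
  assert (H1 : (- Z.of_nat k <= fst u <= Z.of_nat k)%Z) by lia.
  assert (H2 : (- Z.of_nat k <= snd u <= Z.of_nat k)%Z) by lia.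
  destruct H1 as [H1a H1b], H2 as [H2a H2b].
  apply IZR_le in H1a, H1b, H2a, H2b. rewrite opp_IZR in H1a, H2a. rewrite <- INR_IZR_INZ in *.
  assert (1 <= INR k) by (apply (le_INR 1); auto).
  rewrite <- (sqrt_pow2 (2 * INR k * s)) by nra. apply sqrt_le_1_alt.
  set (x := IZR (fst u)) in *. set (y := IZR (snd u)) in *. set (kk := INR k) in *.
  assert (x * x <= kk * kk) by nra. assert (y*y <= kk*kk) by nra.
  assert (0 <= (kk + x) * (s * C)) by (apply Rmult_le_pos; nra).
  assert (C * C <= s * s / 4) by nra.
  assert (0 <= (kk * s) * (s - 2 * C)) by (apply Rmult_le_pos; nra).
  assert (0 <= (kk - 1) * (kk * s * s)) by (apply Rmult_le_pos; nra).
  assert (x * x * (s * s) <= kk * kk * (s * s)) by (apply Rmult_le_compat_r; nra).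
  assert (y * y * (s * s) <= kk * kk * (s * s)) by (apply Rmult_le_compat_r; nra).
  assert (s * s <= kk * kk * (s*s)) by nra.
  replace ((x * s - C) ^ 2 + (y * s - 0) ^ 2) with (x*x*(s*s) - 2 * (x*s*C) + C*C + y*y*(s*s)) by ring.
  replace ((2 * kk * s) ^ 2) with (4 * (kk*kk*(s*s))) by ring.
  nra.
Qed.

Lemma zeta_S a n : zeta_part a (S n) = zeta_part a n + / Rpower (INR (S n)) (a - 1).
Proof. unfold zeta_part. rewrite seq_S, map_app, sumR_app. simpl. ring. Qed.

Lemma zeta_nonneg a n : 0 <= zeta_part a n.
Proof. induction n; [unfold zeta_part; simpl; lra|]. rewrite zeta_S.
  pose proof (Rpower_pos (INR (S n)) (a-1)). pose proof (Rinv_0_lt_compat _ H). lra. Qed.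

Lemma eta_bound a s k d : 0 < a -> 0 < s -> (1 <= k)%nat -> 0 <= d -> d <= 2 * INR k * s ->
  / (Rpower (INR k) a * Rpower (1 + 2 * s) a) <= eta_pl a d.
Proof.
  intros Ha Hs Hk Hd Hds. unfold eta_pl.
  assert (1 <= INR k) by (apply (le_INR 1); auto).
  apply Rinv_le_contravar. apply Rpower_pos.
  rewrite Rpower_mult_distr by lra. apply Rle_Rpower_l; [lra|]. split; [lra|]. nra.
Qed.

Lemma Rpower_split k a : 0 < k -> Rpower k a = Rpower k (a - 1) * k.
Proof. intros Hk. rewrite <- (Rpower_1 k) at 3 by auto. rewrite <- Rpower_plus. f_equal; ring. Qed.

Lemma rings_sum a s C P n : 0 < a -> 0 < s -> 0 < C -> 2 * C <= s -> 0 < P ->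
  8 * P / Rpower (1 + 2 * s) a * zeta_part a n <=
  sumR (map (fun x => P * eta_pl a (dist2 x (C, 0))) (map (G s) (rings n))).
Proof.
  intros Ha Hs HC HCs HP. set (A := Rpower (1 + 2 * s) a). assert (HA : 0 < A) by apply Rpower_pos.
  induction n.
  - unfold zeta_part; simpl. lra.
  - rewrite zeta_S. simpl rings. rewrite !map_app, sumR_app.
    assert (Hr : INR (length (map (G s) (ringZ (S n)))) * (P * / (Rpower (INR (S n)) a * A)) <=
       sumR (map (fun x => P * eta_pl a (dist2 x (C, 0))) (map (G s) (ringZ (S n))))).
    { apply sumR_lb. intros x Hx. rewrite in_map_iff in Hx. destruct Hx as [u [<- Hu]].
      apply Rmult_le_compat_l; [lra|]. apply eta_bound; auto; [lia| |].
      unfold dist2; apply sqrt_pos.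
      apply ring_dist; auto; [lia|]. apply inRing; auto; lia. }
    replace (length (map (G s) (ringZ (S n)))) with (8 * S n)%nat in Hr.
    2:{ unfold ringZ, sideA, sideB, sideC, sideD. rewrite !length_map, !length_app, !length_map, !length_seq. lia. }
    assert (Hk : 0 < INR (S n)) by (apply lt_0_INR; lia).
    assert (Hk2 := Rpower_pos (INR (S n)) (a - 1)).
    rewrite (Rpower_split (INR (S n)) a Hk) in Hr. rewrite mult_INR in Hr.
    replace (INR 8 * INR (S n) * (P * / (Rpower (INR (S n)) (a - 1) * INR (S n) * A)))
      with (8 * P / A * / Rpower (INR (S n)) (a - 1)) in Hr.
    2:{ replace (INR 8) with 8 by (simpl; ring). field. repeat split; lra. }
    lra.
Qed.

Lemma Rpower_div x y a : 0 < x -> 0 < y -> Rpower (x / y) a = Rpower x a * / Rpower y a.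
Proof.
  intros Hx Hy. unfold Rdiv. rewrite <- Rpower_mult_distr by (auto; apply Rinv_0_lt_compat; auto).
  f_equal. unfold Rpower. rewrite ln_Rinv by auto. rewrite <- exp_Ropp. f_equal; ring.
Qed.

Lemma construct No a C D m K : 0 < No -> 2 < a -> 0 < C -> 0 < D -> (4 * K * (K + 1) <= m)%nat ->
  exists (t r : pt) (T : list pt),
       NoDup T /\ length T = m /\ DC C D t r T /\
       forall P, 0 < P ->
         SINR t r T P No (eta_pl a) * zeta_part a K
         <= / 7 * Rpower ((1 + 2 * C * (2 + D)) / (1 + C)) a.
Proof.
  intros HNo Ha HC HD Hm.
  set (s := C * (2 + D)). assert (Hs : 0 < s) by (unfold s; nra).
  assert (HCs : 2 * C <= s) by (unfold s; nra).
  assert (Ginj : Injective (G s)).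
  { intros [u1 u2] [v1 v2] E. unfold G in E; simpl in E. injection E; intros E2 E1.
    apply Rmult_eq_reg_r in E1, E2; try lra. apply eq_IZR in E1, E2. subst; auto. }
  exists (G s (0%Z, 0%Z)), (C, 0), (map (G s) (LZ K (m - 4 * K * (K + 1)))).
  split; [|split; [|split]].
  - apply Injective_map_NoDup; auto. apply NoDup_LZ.
  - rewrite length_map. unfold LZ, extra. rewrite length_app, length_rings, length_map, length_seq. lia.
  - split.
    + unfold dist2, G; cbn [fst snd]. replace ((0 * s - C) ^ 2 + (0 * s - 0) ^ 2) with (C ^ 2) by ring.
      rewrite sqrt_pow2; lra.
    + intros x y Hx Hy Hxy.
      assert (Hg : forall z, In z (G s (0%Z, 0%Z) :: map (G s) (LZ K (m - 4 * K * (K + 1)))) ->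
                exists u, z = G s u).
      { intros z [Hz|Hz]; [eauto|]. rewrite in_map_iff in Hz. destruct Hz as [u [<- _]]; eauto. }
      destruct (Hg x Hx) as [u ->], (Hg y Hy) as [v ->].
      fold s. apply grid_sep; auto. intros ->; auto.
  - intros P HP. unfold SINR. unfold LZ. rewrite map_app, map_app, sumR_app.
    set (Z := zeta_part a K). assert (HZ : 0 <= Z) by apply zeta_nonneg.
    set (A := Rpower (1 + 2 * s) a). assert (HA : 0 < A) by apply Rpower_pos.
    pose proof (rings_sum a s C P K ltac:(lra) Hs HC HCs HP) as H1. fold A Z in H1.
    set (S1 := sumR (map (fun x => P * eta_pl a (dist2 x (C, 0))) (map (G s) (rings K)))) in *.
    set (S2 := sumR (map (fun t' => P * eta_pl a (dist2 t' (C, 0)))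
                       (map (G s) (extra K (m - 4 * K * (K + 1)))))).
    assert (HS2 : 0 <= S2).
    { apply sumR_nonneg. intros x _. unfold eta_pl. pose proof (Rpower_pos (1 + dist2 x (C, 0)) a).
      pose proof (Rinv_0_lt_compat _ H). nra. }
    assert (Hd : dist2 (G s (0%Z, 0%Z)) (C, 0) = C).
    { unfold dist2, G; cbn [fst snd]. replace ((0 * s - C) ^ 2 + (0 * s - 0) ^ 2) with (C ^ 2) by ring.
      rewrite sqrt_pow2; lra. }
    rewrite Hd. unfold eta_pl at 1.
    replace (1 + 2 * C * (2 + D)) with (1 + 2 * s) by (unfold s; ring).
    rewrite Rpower_div by lra. fold A.
    set (E := Rpower (1 + C) a). assert (HE : 0 < E) by apply Rpower_pos.
    assert (H8 : 8 * P / A * Z = 8 * (P * Z) / A) by (field; lra).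
    assert (HPZ : P * Z <= A / 7 * (No + (S1 + S2))).
    { assert (P * Z <= A / 8 * S1).
      { apply Rmult_le_reg_l with (8 / A). apply Rdiv_lt_0_compat; lra.
        replace (8 / A * (P * Z)) with (8 * P / A * Z) by (field; lra).
        replace (8 / A * (A / 8 * S1)) with S1 by (field; lra). lra. }
      assert (0 <= P * Z) by nra. assert (0 <= A * No) by nra. nra. }
    assert (HN : 0 < No + (S1 + S2)).
    { assert (0 <= S1). { pose proof (Rmult_le_pos (8 * P / A) Z ltac:(apply Rmult_le_pos; [lra| apply Rlt_le, Rinv_0_lt_compat; lra]) HZ). lra. } lra. }
    replace (P * / E / (No + (S1 + S2)) * Z) with ((P * Z) / (No + (S1 + S2)) * / E) by (field; lra).
    replace (/ 7 * (A * / E)) with ((A / 7) * / E) by (field; lra).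
    apply Rmult_le_compat_r. apply Rlt_le, Rinv_0_lt_compat; lra.
    apply Rmult_le_reg_r with (No + (S1 + S2)); auto.
    replace (P * Z / (No + (S1 + S2)) * (No + (S1 + S2))) with (P * Z) by (field; lra). lra.
Qed.

Lemma Kbound_ok m : (4 * Kbound m * (Kbound m + 1) <= m)%nat.
Proof.
  unfold Kbound. set (x := sqrt (INR m / 7) - 2). destruct (base_Int_part x) as [H1 H2].
  destruct (Z_le_gt_dec 0 (Int_part x)) as [Hp|Hn].
  - set (K := Z.to_nat (Int_part x)).
    assert (HK : INR K = IZR (Int_part x)) by (unfold K; rewrite INR_IZR_INZ, Z2Nat.id; auto).
    assert (HK0 : 0 <= INR K) by apply pos_INR.
    assert (Hm : 0 <= INR m / 7) by (pose proof (pos_INR m); lra).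
    assert (Hsq : (INR K + 2) * (INR K + 2) <= INR m / 7).
    { assert (Hx : INR K + 2 <= sqrt (INR m / 7)) by (rewrite HK; unfold x in H1 |- *; lra).
      rewrite <- (sqrt_sqrt (INR m / 7)) by auto. apply Rmult_le_compat; lra. }
    apply INR_le. rewrite !mult_INR, plus_INR. replace (INR 4) with 4 by (simpl; ring).
    replace (INR 1) with 1 by reflexivity. nra.
  - replace (Z.to_nat (Int_part x)) with 0%nat by lia. lia.
Qed.

Lemma Kbound_big K0 : (K0 <= Kbound (7 * (K0 + 3) * (K0 + 3)))%nat.
Proof.
  unfold Kbound.
  assert (E : sqrt (INR (7 * (K0 + 3) * (K0 + 3)) / 7) - 2 = INR K0 + 1).
  { rewrite !mult_INR, plus_INR. replace (INR 7) with 7 by (simpl; ring).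
    replace (INR 3) with 3 by (simpl; ring).
    replace (7 * (INR K0 + 3) * (INR K0 + 3) / 7) with ((INR K0 + 3) ^ 2) by field.
    rewrite sqrt_pow2; [ring|]. pose proof (pos_INR K0); lra. }
  rewrite E. destruct (base_Int_part (INR K0 + 1)) as [H1 H2].
  assert (H : IZR (Z.of_nat K0) < IZR (Int_part (INR K0 + 1))) by (rewrite <- INR_IZR_INZ; lra).
  apply lt_IZR in H. lia.
Qed.

Lemma zeta_mono a K0 K : (K0 <= K)%nat -> zeta_part a K0 <= zeta_part a K.
Proof.
  induction 1; [lra|]. rewrite zeta_S. pose proof (Rpower_pos (INR (S m)) (a - 1)).
  pose proof (Rinv_0_lt_compat _ H0). lra.
Qed.

Definition zf (a : R) (n : nat) := / Rpower (INR (S n)) (a - 1).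

Lemma sum_zeta a N : sum_n (zf a) N = zeta_part a (S N).
Proof.
  induction N.
  - rewrite sum_O. unfold zeta_part, zf; simpl. ring.
  - rewrite sum_Sn, zeta_S, IHN. reflexivity.
Qed.

Lemma zeta_pos a K : (1 <= K)%nat -> 0 < zeta_part a K.
Proof.
  intros HK. apply Rlt_le_trans with (zeta_part a 1).
  - unfold zeta_part; simpl. pose proof (Rpower_pos 1 (a - 1)).
    pose proof (Rinv_0_lt_compat _ H). lra.
  - apply zeta_mono; auto.
Qed.

Lemma zeta_approx a B beta : 0 <= B -> 0 < beta -> B * / zeta_inf a < beta ->
  exists K0, 0 < zeta_part a K0 /\ B * / zeta_part a K0 < beta.
Proof.
  intros HB Hb H.
  assert (Hinc : forall n, sum_n (zf a) n <= sum_n (zf a) (S n)).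
  { intros n; rewrite !sum_zeta; apply zeta_mono; lia. }
  assert (Hpos : forall n, 0 < sum_n (zf a) n) by (intros n; rewrite sum_zeta; apply zeta_pos; lia).
  assert (Hmon : forall n, sum_n (zf a) 0 <= sum_n (zf a) n) by (intros n; rewrite !sum_zeta; apply zeta_mono; lia).
  assert (Hlim := Lim_seq_correct _ (ex_lim_seq_incr _ Hinc)).
  assert (HZ : zeta_inf a = real (Lim_seq (sum_n (zf a)))) by reflexivity.
  assert (Hgoal : forall N, B / beta < sum_n (zf a) N -> exists K0, 0 < zeta_part a K0 /\ B * / zeta_part a K0 < beta).
  { intros N HN. exists (S N). rewrite <- sum_zeta. split; auto.
    specialize (Hpos N). apply Rlt_div_l in HN; auto. 
    apply Rmult_lt_reg_r with (sum_n (zf a) N); auto.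
    replace (B * / sum_n (zf a) N * sum_n (zf a) N) with B by (field; lra). lra. }
  destruct (Lim_seq (sum_n (zf a))) as [L| |] eqn:EL; simpl in HZ.
  - assert (HL : Rbar_le (sum_n (zf a) 0) L).
    { apply (is_lim_seq_le (fun _ => sum_n (zf a) 0) (sum_n (zf a))); auto. apply is_lim_seq_const. }
    simpl in HL. specialize (Hpos 0%nat).
    rewrite HZ in H; simpl in H.
    assert (HBL : B / beta < L).
    { apply Rlt_div_l; auto. apply Rmult_lt_reg_r with (/ L). apply Rinv_0_lt_compat; lra.
      replace (L * beta * / L) with beta by (field; lra). lra. }
    apply is_lim_seq_spec in Hlim. simpl in Hlim.
    assert (He : 0 < L - B / beta) by lra.
    destruct (Hlim (mkposreal _ He)) as [N HN]. specialize (HN N (Nat.le_refl N)). simpl in HN.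
    apply Hgoal with N. apply Rabs_def2 in HN. lra.
  - apply is_lim_seq_spec in Hlim. destruct (Hlim (B / beta)) as [N HN]. apply Hgoal with N. apply HN; lia.
  - apply is_lim_seq_spec in Hlim. destruct (Hlim 0) as [N HN]. specialize (HN N (Nat.le_refl N)).
    specialize (Hpos N). lra.
Qed.

Lemma bad No a C D beta K0 : 0 < No -> 2 < a -> 0 < C -> 0 < D -> 0 < beta ->
  0 < zeta_part a K0 ->
  / 7 * Rpower ((1 + 2 * C * (2 + D)) / (1 + C)) a * / zeta_part a K0 < beta ->
  exists (t r : pt) (T : list pt),
       NoDup T /\ DC C D t r T /\
       forall P, 0 < P -> SINR t r T P No (eta_pl a) < beta.
Proof.
  intros HNo Ha HC HD Hb HZ0 H.
  set (m := (7 * (K0 + 3) * (K0 + 3))%nat).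
  destruct (construct No a C D m (Kbound m) HNo Ha HC HD (Kbound_ok m)) as [t [r [T [HT [_ [HDC HS]]]]]].
  exists t, r, T. split; auto. split; auto. intros P HP. specialize (HS P HP).
  set (B := / 7 * Rpower ((1 + 2 * C * (2 + D)) / (1 + C)) a) in *.
  assert (HB : 0 <= B) by (unfold B; pose proof (Rpower_pos ((1 + 2 * C * (2 + D)) / (1 + C)) a); lra).
  assert (HZ : zeta_part a K0 <= zeta_part a (Kbound m)) by (apply zeta_mono, Kbound_big).
  set (Z := zeta_part a (Kbound m)) in *. set (Z0 := zeta_part a K0) in *.
  assert (H1 : SINR t r T P No (eta_pl a) <= B * / Z).
  { apply Rmult_le_reg_r with Z; [lra|]. replace (B * / Z * Z) with B by (field; lra). auto. }
  assert (H2 : B * / Z <= B * / Z0).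
  { apply Rmult_le_compat_l; auto. apply Rinv_le_contravar; auto. }
  lra.
Qed.

Lemma not_ens C D beta No a t r T : NoDup T -> DC C D t r T ->
  (forall P, 0 < P -> SINR t r T P No (eta_pl a) < beta) -> ~ ensures_SINR C D beta No (eta_pl a).
Proof.
  intros HT HDC HS [P [HP HE]]. specialize (HE t r T HT HDC). specialize (HS P HP). lra.
Qed.

Theorem lemma3 (No alpha : R) (HNo : 0 < No) (Halpha : 2 < alpha) :
  (* (a) *)
  (forall (C D : R) (m : nat), 0 < C -> 0 < D -> (0 < m)%nat ->
     exists (t r : pt) (T : list pt),
       NoDup T /\ length T = m /\ DC C D t r T /\
       forall P, 0 < P ->
         SINR t r T P No (eta_pl alpha) * zeta_part alpha (Kbound m)
         <= / 7 * Rpower ((1 + 2 * C * (2 + D)) / (1 + C)) alpha)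
  /\
  (* (b) *)
  (forall (C D beta : R), 0 < C -> 0 < D -> 0 < beta ->
     / 7 * Rpower ((1 + 2 * C * (2 + D)) / (1 + C)) alpha * / zeta_inf alpha < beta ->
     ~ ensures_SINR C D beta No (eta_pl alpha) /\
     exists (t r : pt) (T : list pt),
       NoDup T /\ DC C D t r T /\
       forall P, 0 < P -> SINR t r T P No (eta_pl alpha) < beta)
  /\
  (* (c) *)
  (forall beta : R, 0 < beta -> / 7 * / zeta_inf alpha < beta ->
     exists eps : R, 0 < eps /\
       forall C D : R, 0 < C -> C < eps -> 0 < D -> D < eps ->
         ~ ensures_SINR C D beta No (eta_pl alpha)).
Proof.
  split; [|split].
  - intros C D m HC HD Hm. apply construct; auto. apply Kbound_ok.
  - intros C D beta HC HD Hb H.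
    assert (HB : 0 <= / 7 * Rpower ((1 + 2 * C * (2 + D)) / (1 + C)) alpha)
      by (pose proof (Rpower_pos ((1 + 2 * C * (2 + D)) / (1 + C)) alpha); lra).
    destruct (zeta_approx alpha _ beta HB Hb H) as [K0 [HZ0 HK0]].
    destruct (bad No alpha C D beta K0 HNo Halpha HC HD Hb HZ0 HK0) as [t [r [T [HT [HDC HS]]]]].
    split; [eapply not_ens; eauto|]. exists t, r, T; auto.
  - intros beta Hb H.
    destruct (zeta_approx alpha (/ 7) beta ltac:(lra) Hb H) as [K0 [HZ0 HK0]].
    set (Z0 := zeta_part alpha K0) in *.
    set (g := 7 * beta * Z0).
    assert (Hg : 1 < g).
    { unfold g. apply Rmult_lt_reg_r with (/ 7 * / Z0).
      apply Rmult_lt_0_compat; [lra| apply Rinv_0_lt_compat; auto].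
      replace (7 * beta * Z0 * (/ 7 * / Z0)) with beta by (field; lra). lra. }
    assert (Hlg : 0 < ln g) by (rewrite <- ln_1; apply ln_increasing; lra).
    exists (Rmin 1 (ln g / (6 * alpha))). split.
    { apply Rmin_glb_lt; [lra|]. apply Rdiv_lt_0_compat; lra. }
    intros C D HC HCe HD HDe.
    assert (HC1 : C < ln g / (6 * alpha)) by (eapply Rlt_le_trans; [apply HCe| apply Rmin_r]).
    assert (HD1 : D < 1) by (eapply Rlt_le_trans; [apply HDe| apply Rmin_l]).
    set (d := 2 * C * (2 + D)).
    assert (Hd : 0 < d) by (unfold d; nra).
    assert (Had : alpha * d < ln g).
    { assert (d < 6 * C) by (unfold d; nra).
      assert (6 * alpha * C < ln g).
      { apply Rmult_lt_reg_r with (/ (6 * alpha)). apply Rinv_0_lt_compat; lra.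
        replace (6 * alpha * C * / (6 * alpha)) with C by (field; lra). apply HC1. }
      nra. }
    assert (HR : Rpower ((1 + d) / (1 + C)) alpha < g).
    { apply Rle_lt_trans with (Rpower (1 + d) alpha).
      - apply Rle_Rpower_l; [lra|]. split. apply Rdiv_lt_0_compat; lra.
        apply Rmult_le_reg_r with (1 + C); [lra|].
        replace ((1 + d) / (1 + C) * (1 + C)) with (1 + d) by (field; lra). nra.
      - unfold Rpower. rewrite <- (exp_ln g) by lra. apply exp_increasing.
        assert (ln (1 + d) < d).
        { rewrite <- (ln_exp d) at 2. apply ln_increasing; [lra|]. apply exp_ineq1; lra. }
        nra. }
    destruct (bad No alpha C D beta K0 HNo Halpha HC HD Hb HZ0) as [t [r [T [HT [HDC HS]]]]].
    { fold d. fold Z0. apply Rmult_lt_reg_r with (7 * Z0). lra.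
      replace (/ 7 * Rpower ((1 + d) / (1 + C)) alpha * / Z0 * (7 * Z0))
        with (Rpower ((1 + d) / (1 + C)) alpha) by (field; lra).
      unfold g in HR. lra. }
    eapply not_ens; eauto.
Qed.
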